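(* Let the Schubart orbit have minimal period $4$ and let $\mathcal{A}_{Schubart}$ denote its action over one period $t\in[0,4]$. Then $\tfrac14\mathcal{A}_{Schubart}<3.5383$.
   Context: Planar (in fact collinear) three-body problem with masses $m_1=m_2=m_3=1$, action $\int(\tfrac12\sum|\dot q_i|^2+\sum_{i<j}1/|q_i-q_j|)dt$. The Schubart orbit is the collinear periodic solution (with regularized binary collisions) in which the middle body alternately collides with the two outer bodies. It is normalized so that at $t=0$ bodies 1 and 2 undergo a binary collision, and at $t=1$ body 1 is at the origin with bodies 2 and 3 symmetrically placed on either side (an Euler configuration). A quarter of it ($t\in[0,1]$) is an action minimizer over $H^1$ paths on the $x$-axis with center of mass $0$ connecting some configuration $(q_1,q_2,q_3)=(-c_1,-c_1,2c_1)$ to some configuration $(0,-d_1,d_1)$, $(c_1,d_1)\in\mathbb{R}^2$. *)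

(* Defs.v *)
From HB Require Import structures.
From mathcomp Require Import all_boot all_order all_algebra.
From mathcomp Require Import all_classical all_reals all_analysis.
Set Implicit Arguments. Unset Strict Implicit. Unset Printing Implicit Defensive.
Import Order.TTheory GRing.Theory Num.Theory.
Local Open Scope classical_set_scope.
Local Open Scope ring_scope.

Section Schubart.
Variable R : realType.

(* Newtonian pair potential 1/|x-y| (unit masses), equal to +oo at collision. *)
Definition pairpot (x y : R) : \bar R :=
  if x == y then +oo%E else (`|x - y|^-1)%:E.

Definition lagrangian (q1 q2 q3 v1 v2 v3 : R -> R) (t : R) : \bar R :=
  (((v1 t ^+ 2 + v2 t ^+ 2 + v3 t ^+ 2) / 2)%:E
   + pairpot (q1 t) (q2 t) + pairpot (q1 t) (q3 t) + pairpot (q2 t) (q3 t))%E.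

Definition action (q1 q2 q3 v1 v2 v3 : R -> R) : \bar R :=
  (\int[@lebesgue_measure R]_(t in `[0%R, 1%R]) lagrangian q1 q2 q3 v1 v2 v3 t)%E.

(* q is in H^1([0,1]) with weak derivative v: v is square-integrable on
   [0,1] and q(t) = q(0) + int_0^t v for t in [0,1]. *)
Definition H1_with_deriv (q v : R -> R) : Prop :=
  (@lebesgue_measure R).-integrable `[0%R, 1%R] (EFin \o v) /\
  (@lebesgue_measure R).-integrable `[0%R, 1%R] (EFin \o (fun t => v t ^+ 2)) /\
  forall t, t \in `[0%R, 1%R] ->
    q t = q 0 + Rintegral (@lebesgue_measure R) `[0, t] v.

Definition admissible (q1 q2 q3 v1 v2 v3 : R -> R) : Prop :=
  [/\ H1_with_deriv q1 v1, H1_with_deriv q2 v2, H1_with_deriv q3 v3,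
      (forall t, t \in `[0%R, 1%R] -> q1 t + q2 t + q3 t = 0)
    & exists c d : R,
      [/\ q1 0 = - c, q2 0 = - c & q3 0 = 2 * c] /\
      [/\ q1 1 = 0, q2 1 = - d & q3 1 = d]].

(* The action of a quarter of the Schubart orbit = the minimal action over
   admissible paths (the quarter is an action minimizer in this class). *)
Definition schubart_quarter_action : \bar R :=
  ereal_inf [set A | exists q1 q2 q3 v1 v2 v3 : R -> R,
     admissible q1 q2 q3 v1 v2 v3 /\ A = action q1 q2 q3 v1 v2 v3].

Definition schubart_action : \bar R := (4%:E * schubart_quarter_action)%E.

End Schubart.

(* Main.v *)
Require Import Defs.
From HB Require Import structures.
From mathcomp Require Import all_boot all_order all_algebra.
From mathcomp Require Import all_classical all_reals all_analysis.
From mathcomp Require Import measurable_realfun ring lra.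
Import Order.TTheory GRing.Theory Num.Theory.
Local Open Scope ring_scope.

Section Helpers.
Import numFieldNormedType.Exports.
Local Open Scope classical_set_scope.
Context {R : realType}.
Local Notation mu := (@lebesgue_measure R).

Lemma KL (f F : R -> R) (b : R) : 0 < b ->
  measurable_fun `]0%R, b] f ->
  (forall x : R, 0 < x -> 0 <= f x) ->
  (forall x : R, 0 < x -> {for x, continuous f}) ->
  (forall x : R, 0 < x -> is_derive x 1 F (f x)) ->
  F x @[x --> 0^'+] --> F 0 ->
  (\int[mu]_(x in `]0%R, b]) (f x)%:E = (F b - F 0)%:E)%E.
Proof.
move=> b0 mf f0 cf dF F0.
have cF y : 0 < y -> {for y, continuous F}.
  move=> y0; have [dFy _] := dF y y0.
  by apply: differentiable_continuous; exact/derivable1_diffP.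
pose u (n : nat) : R := b / n.+2%:R.
have u0 n : 0 < u n by rewrite divr_gt0 // ltr0n.
have ub n : u n < b.
  by rewrite /u ltr_pdivrMr ?ltr0n // ltr_pMr // ltr1n.
have ucvg : u n @[n --> \oo] --> 0.
  rewrite -(mulr0 b); apply: cvgMr.
  have := @cvg_harmonic R; rewrite -cvg_shiftS; apply: cvg_trans.
  by apply: near_eq_cvg; near=> n.
pose A n : set R := `[u n, b]%classic.
pose g n : R -> \bar R := (EFin \o f) \_ (A n).
pose D : set R := `]0%R, b]%classic.
have mD : measurable D by exact: measurable_itv.
have mA n : measurable (A n) by exact: measurable_itv.
have mg n : measurable_fun D (g n).
  have mEf : measurable_fun D (EFin \o f) by exact/measurable_EFinP.
  exact: ((measurable_restrict (EFin \o f) (mA n) mD).1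
    (measurable_funS mD (@subIsetl _ D (A n)) mEf)).
have g0 n x : D x -> (0 <= g n x)%E.
  move=> _; apply: erestrict_ge0 => y; rewrite /A /= in_itv /= => /andP[uy _].
  by rewrite lee_fin f0 // (lt_le_trans (u0 n)).
have nd x : D x -> {homo g^~ x : n m / (n <= m)%N >-> (n <= m)%E}.
  move=> _ n m nm; apply: restrict_lee.
    move=> y; rewrite /A /= in_itv /= => /andP[uy _].
    by rewrite lee_fin f0 // (lt_le_trans (u0 m)).
  move=> y; rewrite /A /= !in_itv /= => /andP[uy ->]; rewrite andbT.
  apply: le_trans uy; rewrite /u ler_pM2l // lef_pV2 ?posrE ?ltr0n //.
  by rewrite ler_nat.
have lim x : D x -> limn (g^~ x) = (f x)%:E.
  rewrite /D /= in_itv /= => /andP[x0 xb].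
  apply: lim_near_cst => //.
  near=> n.
  have unx : u n < x by near: n; exact: (cvgr_lt 0 ucvg x x0).
  by rewrite /g patchT // inE /A /= in_itv /= (ltW unx) xb.
have -> : (\int[mu]_(x in `]0%R, b]) (f x)%:E = \int[mu]_(x in `]0%R, b]) (fun x => limn (g^~ x)) x)%E.
  by apply: eq_integral => x /[!inE] xD; rewrite lim.
rewrite (monotone_convergence mu mD mg g0 nd).
have eqn n : (\int[mu]_(x in `]0%R, b]) g n x = (F b - F (u n))%:E)%E.
  rewrite /g -integral_mkcondr.
  have -> : D `&` A n = `[u n, b]%classic.
    apply/seteqP; split => y /=; rewrite /A /D /= !in_itv /=.
      by move=> [/andP[_ ->] ->].
    move=> /andP[uy yb]; split; rewrite ?uy ?yb ?andbT //.
    exact: (lt_le_trans (u0 n)).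
  rewrite EFinB; apply: continuous_FTC2 => //.
  - apply: continuous_in_subspaceT => y; rewrite inE /= in_itv /= => /andP[uy _].
    by apply: cf; rewrite (lt_le_trans (u0 n)).
  - split.
    + move=> y; rewrite in_itv /= => /andP[uy _].
      by have := dF y (lt_trans (u0 n) uy) => -[].
    + exact: cvg_at_right_filter (cF _ (u0 n)).
    + exact: cvg_at_left_filter (cF _ (lt_trans (u0 n) (ub n))).
  - move=> y; rewrite in_itv /= => /andP[uy _].
    by have := dF y (lt_trans (u0 n) uy) => -[_ <-]; rewrite derive1E.
under eq_fun do rewrite eqn.
apply/cvg_lim => //.
apply: cvg_EFin; first exact: nearW.
apply: cvgB; first exact: cvg_cst.
by apply: (cvg_at_rightP F 0 (F 0)).1 => //.
Unshelve. all: by end_near. Qed.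

Lemma int0b (f F : R -> R) (b : R) : 0 < b ->
  measurable_fun setT f ->
  (forall x : R, 0 < x -> 0 <= f x) ->
  (forall x : R, 0 < x -> {for x, continuous f}) ->
  (forall x : R, 0 < x -> is_derive x 1 F (f x)) ->
  F x @[x --> 0^'+] --> F 0 ->
  (\int[mu]_(x in `[0%R, b]) (f x)%:E = (F b - F 0)%:E)%E.
Proof.
move=> b0 mf f0 cf dF F0.
rewrite -integral_itv_obnd_cbnd; last exact/measurable_EFinP/measurable_funTS.
by apply: KL => //; exact: measurable_funTS.
Qed.

Lemma integ0b (f F : R -> R) (b : R) : 0 < b ->
  measurable_fun setT f ->
  (forall x : R, 0 <= f x) ->
  (forall x : R, 0 < x -> {for x, continuous f}) ->
  (forall x : R, 0 < x -> is_derive x 1 F (f x)) ->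
  F x @[x --> 0^'+] --> F 0 ->
  mu.-integrable `[0%R, b] (EFin \o f).
Proof.
move=> b0 mf f0 cf dF F0.
apply/integrableP; split; first exact/measurable_EFinP/measurable_funTS.
have -> : (\int[mu]_(x in `[0%R,b]) `|(EFin \o f) x|)%E = (\int[mu]_(x in `[0%R,b]) (f x)%:E)%E.
  by apply: eq_integral => x _ /=; rewrite ger0_norm.
by rewrite (int0b f F b b0 mf (fun x _ => f0 x) cf dF F0) ltry.
Qed.

Lemma Rint0b (f F : R -> R) (b : R) : 0 < b ->
  measurable_fun setT f ->
  (forall x : R, 0 < x -> 0 <= f x) ->
  (forall x : R, 0 < x -> {for x, continuous f}) ->
  (forall x : R, 0 < x -> is_derive x 1 F (f x)) ->
  F x @[x --> 0^'+] --> F 0 ->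
  \int[mu]_(x in `[0%R, b]) f x = F b - F 0.
Proof.
move=> b0 mf f0 cf dF F0.
by rewrite /Rintegral (int0b f F b b0 mf f0 cf dF F0).
Qed.

Lemma cont_of_der (f : R -> R) (x df : R) :
  is_derive x 1 f df -> {for x, continuous f}.
Proof.
move=> [d _]; apply: differentiable_continuous; exact/derivable1_diffP.
Qed.

Lemma rlim (c0 c1 c2 c3 r : R) : 0 < r ->
  (c0 + c1 * x `^ r + c2 * x + c3 * x ^+ 2) @[x --> 0^'+] --> c0.
Proof.
move=> r0.
have hp : x `^ r @[x --> 0^'+] --> 0 := powR_cvg0 r0.
have hx : x @[x --> (0:R)^'+] --> (0:R) := @cvg_at_right_filter _ _ id 0 0 cvg_id.
suff H : (c0 + c1 * x `^ r + c2 * x + c3 * x ^+ 2) @[x --> 0^'+] -->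
    (c0 + c1 * 0 + c2 * 0 + c3 * 0 ^+ 2).
  by move: H; rewrite expr0n /= !mulr0 !addr0.
apply: cvgD; [apply: cvgD; [apply: cvgD|]|].
- exact: cvg_cst.
- exact: cvgM (cvg_cst _) hp.
- exact: cvgM (cvg_cst _) hx.
- exact: cvgM (cvg_cst _) (cvgM hx hx).
Qed.

Lemma dpow (c r : R) {x : R} : 0 < x ->
  is_derive x 1 (fun t => c * t `^ r) (c * (r * x `^ (r - 1))).
Proof.
move=> x0; have h := is_deriveZ c (is_derive1_powR r x0).
have -> : (fun t => c * t `^ r) = c \*: (fun t : R => t `^ r) by apply/funext.
exact: h.
Qed.

Lemma dpoly (c0 c1 c2 x : R) :
  is_derive x 1 (fun t => c0 + c1 * t + c2 * t ^+ 2) (c1 + c2 * (2 * x)).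
Proof.
have h := is_deriveD (is_deriveD (is_derive_cst c0 x 1) (is_deriveZ c1 (is_derive_id x 1)))
  (is_deriveZ c2 (is_deriveX 2 (is_derive_id x 1))).
have -> : (fun t => c0 + c1 * t + c2 * t ^+ 2) =
   (cst c0 + c1 \*: id + c2 \*: (id ^+ 2)) by apply/funext.
eapply is_derive_eq; first exact: h.
rewrite /GRing.scale /=; ring.
Qed.

Lemma dadd {f g : R -> R} {x df dg : R} :
  is_derive x 1 f df -> is_derive x 1 g dg ->
  is_derive x 1 (fun t => f t + g t) (df + dg).
Proof.
move=> hf hg; have -> : (fun t => f t + g t) = f + g by apply/funext.
exact: is_deriveD.
Qed.

End Helpers.

Section Path.
Import numFieldNormedType.Exports.
Local Open Scope classical_set_scope.
Context {R : realType}.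
Local Notation mu := (@lebesgue_measure R).

Definition aa : R := 15 / 8.
Definition Q1 (t : R) : R := aa/2 * (t `^ (2/3) - 1).
Definition Q2 (t : R) : R := - (aa/2 * (t `^ (2/3) + 1)).
Definition Q3 (t : R) : R := aa.
Definition V1 (t : R) : R := aa/3 * t `^ (-(1/3)).
Definition V2 (t : R) : R := - V1 t.
Definition V3 (t : R) : R := 0.
Definition W2 (t : R) : R := aa^+2/9 * t `^ (-(2/3)).
Definition SqF (t : R) : R := aa^+2/3 * t `^ (1/3).
Definition KK : R := aa^+2/9 + aa^-1.
Definition Gf (t : R) : R := KK * t `^ (-(2/3)) + (4/3 + t/6) / aa.
Definition GF (t : R) : R := 3 * KK * t `^ (1/3) + (4/3 * t + t^+2/12) / aa.

Lemma aa_gt0 : 0 < aa. Proof. by rewrite /aa divr_gt0. Qed.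
Lemma KK_gt0 : 0 < KK.
Proof. by rewrite /KK addr_gt0 ?invr_gt0 ?aa_gt0 // divr_gt0 // exprn_gt0 // aa_gt0. Qed.

Lemma V1_ge0 t : 0 <= V1 t.
Proof. by rewrite /V1 mulr_ge0 ?powR_ge0 // divr_ge0 // ltW // aa_gt0. Qed.

Lemma W2_ge0 t : 0 <= W2 t.
Proof. by rewrite /W2 mulr_ge0 ?powR_ge0 // divr_ge0 // exprn_ge0 // ltW // aa_gt0. Qed.

Lemma Gf_ge0 t : 0 <= t -> 0 <= Gf t.
Proof.
move=> t0; rewrite /Gf; apply: addr_ge0.
  by rewrite mulr_ge0 ?powR_ge0 // ltW // KK_gt0.
by rewrite divr_ge0 ?(ltW aa_gt0) // addr_ge0 // divr_ge0.
Qed.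

Lemma V1sq t : V1 t ^+ 2 = W2 t.
Proof.
have e : (t `^ (-(1/3)))^+2 = t `^ (-(2/3)).
  by rewrite -powR_mulrn ?powR_ge0 // -powRrM; congr (_ `^ _); field.
by rewrite /V1 /W2 exprMn e; congr (_ * _); field.
Qed.

Lemma mV1 : measurable_fun setT V1.
Proof. by apply: measurable_funM => //; exact: measurable_powR. Qed.
Lemma mW2 : measurable_fun setT W2.
Proof. by apply: measurable_funM => //; exact: measurable_powR. Qed.
Lemma mGf : measurable_fun setT Gf.
Proof.
apply: measurable_funD; first by apply: measurable_funM => //; exact: measurable_powR.
apply: measurable_funM => //; apply: measurable_funD => //.
exact: measurable_funM.
Qed.

Lemma dQ1 (x : R) : 0 < x -> is_derive x 1 Q1 (V1 x).
Proof.
move=> x0; have h := dadd (dpow (aa/2) (2/3) x0) (dpoly (-(aa/2)) 0 0 x).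
have -> : Q1 = (fun t => aa/2 * t `^ (2/3) + (-(aa/2) + 0 * t + 0 * t ^+ 2)).
  by apply/funext => t; rewrite /Q1; ring.
eapply is_derive_eq; first exact: h.
have e : (2/3 - 1 : R) = -(1/3) by field.
by rewrite /V1 e; field.
Qed.

Lemma dSq (x : R) : 0 < x -> is_derive x 1 SqF (W2 x).
Proof.
move=> x0; eapply is_derive_eq; first exact: (dpow (aa^+2/3) (1/3) x0).
have e : (1/3 - 1 : R) = -(2/3) by field.
by rewrite /W2 e; field.
Qed.

Lemma dGF (x : R) : 0 < x -> is_derive x 1 GF (Gf x).
Proof.
move=> x0; have h := dadd (dpow (3 * KK) (1/3) x0) (dpoly 0 (4/(3*aa)) (1/(12*aa)) x).
have -> : GF = (fun t => 3 * KK * t `^ (1/3) + (0 + 4/(3*aa) * t + 1/(12*aa) * t ^+ 2)).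
  by apply/funext => t; rewrite /GF; field; rewrite lt0r_neq0 // aa_gt0.
eapply is_derive_eq; first exact: h.
have e : (1/3 - 1 : R) = -(2/3) by field.
by rewrite /Gf e; field; rewrite lt0r_neq0 // aa_gt0.
Qed.

Lemma cV1 (x : R) : 0 < x -> {for x, continuous V1}.
Proof. by move=> x0; apply: cont_of_der (dpow (aa/3) (-(1/3)) x0). Qed.
Lemma cW2 (x : R) : 0 < x -> {for x, continuous W2}.
Proof. by move=> x0; apply: cont_of_der (dpow (aa^+2/9) (-(2/3)) x0). Qed.
Lemma cGf (x : R) : 0 < x -> {for x, continuous Gf}.
Proof.
move=> x0; have h := dadd (dpow KK (-(2/3)) x0) (dpoly (4/3/aa) (1/(6*aa)) 0 x).
have -> : Gf = (fun t => KK * t `^ (-(2/3)) + (4/3/aa + 1/(6*aa) * t + 0 * t ^+ 2)).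
  by apply/funext => t; rewrite /Gf; field; rewrite lt0r_neq0 // aa_gt0.
exact: cont_of_der h.
Qed.

Lemma n0 (r : R) : 0 < r -> r != 0. Proof. exact: lt0r_neq0. Qed.

Lemma lQ1 : Q1 x @[x --> 0^'+] --> Q1 0.
Proof.
have -> : Q1 0 = - (aa/2) by rewrite /Q1 powR0 ?n0 ?divr_gt0 //; ring.
have -> : Q1 = (fun t => - (aa/2) + aa/2 * t `^ (2/3) + 0 * t + 0 * t ^+ 2).
  by apply/funext => t; rewrite /Q1; ring.
by apply: rlim; rewrite divr_gt0.
Qed.

Lemma lSq : SqF x @[x --> 0^'+] --> SqF 0.
Proof.
have -> : SqF 0 = 0 by rewrite /SqF powR0 ?n0 ?divr_gt0 // mulr0.
have -> : SqF = (fun t => 0 + aa^+2/3 * t `^ (1/3) + 0 * t + 0 * t ^+ 2).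
  by apply/funext => t; rewrite /SqF; ring.
by apply: rlim; rewrite divr_gt0.
Qed.

Lemma lGF : GF x @[x --> 0^'+] --> GF 0.
Proof.
have -> : GF 0 = 0.
  by rewrite /GF powR0 ?n0 ?divr_gt0 // expr0n /= !(mulr0, mul0r, add0r, addr0).
have -> : GF = (fun t => 0 + 3 * KK * t `^ (1/3) + 4/(3*aa) * t + 1/(12*aa) * t ^+ 2).
  by apply/funext => t; rewrite /GF; field; rewrite lt0r_neq0 // aa_gt0.
by apply: rlim; rewrite divr_gt0.
Qed.


Lemma ineq (P x : R) : 0 < P -> P ^+ 2 <= x -> x <= 1 ->
  (aa/2 * (3 - P))^-1 + (aa/2 * (P + 3))^-1 <= (4/3 + x/6) / aa.
Proof.
move=> P0 P2 x1.
have P1 : P <= 1 by nra.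
have a0 := aa_gt0.
have h3 : 0 < 3 - P by lra.
have h3' : 0 < P + 3 by lra.
have -> : (aa/2 * (3 - P))^-1 + (aa/2 * (P + 3))^-1 =
    12 / (aa * ((3 - P) * (P + 3))).
  by field; rewrite (lt0r_neq0 h3) (lt0r_neq0 h3') (lt0r_neq0 a0).
rewrite ler_pdivrMr; last by rewrite !mulr_gt0.
have -> : (4/3 + x/6) / aa * (aa * ((3 - P) * (P + 3))) =
    (4/3 + x/6) * ((3 - P) * (P + 3)).
  by field; rewrite (lt0r_neq0 a0).
have H1 : 0 <= (x - P^+2) * (9 - P^+2).
  by rewrite mulr_ge0 // subr_ge0 //; nra.
have H2 : 0 <= P^+2 * (1 - P^+2).
  by rewrite mulr_ge0 ?sqr_ge0 // subr_ge0; nra.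
nra.
Qed.

Lemma lag_le (x : R) : 0 < x -> x <= 1 ->
  (lagrangian Q1 Q2 Q3 V1 V2 V3 x <= (Gf x)%:E)%E.
Proof.
move=> x0 x1.
have a0 := aa_gt0.
have P0 : 0 < x `^ (2/3) by rewrite powR_gt0.
have PZ : x `^ (2/3) * x `^ (-(2/3)) = 1.
  rewrite -powRD; first by rewrite addrN powRr0.
  by rewrite addrN eqxx /= lt0r_neq0.
have PiZ : (x `^ (2/3))^-1 = x `^ (-(2/3)).
  by apply: (mulfI (lt0r_neq0 P0)); rewrite mulfV ?PZ // lt0r_neq0.
have P2 : (x `^ (2/3)) ^+ 2 <= x.
  rewrite -powR_mulrn ?powR_ge0 // -powRrM; apply: ge1r_powR; first by rewrite x0.
  lra.
have P1 : x `^ (2/3) <= 1 by nra.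
have e12 : Q1 x - Q2 x = aa * x `^ (2/3) by rewrite /Q1 /Q2; field.
have e13 : Q1 x - Q3 x = - (aa/2 * (3 - x `^ (2/3))) by rewrite /Q1 /Q3; field.
have e23 : Q2 x - Q3 x = - (aa/2 * (x `^ (2/3) + 3)) by rewrite /Q2 /Q3; field.
have g12 : 0 < aa * x `^ (2/3) by rewrite mulr_gt0.
have g13 : 0 < aa/2 * (3 - x `^ (2/3)) by rewrite mulr_gt0 ?divr_gt0 //; lra.
have g23 : 0 < aa/2 * (x `^ (2/3) + 3) by rewrite mulr_gt0 ?divr_gt0 //; lra.
have n12 : Q1 x != Q2 x by rewrite -subr_eq0 e12 lt0r_neq0.
have n13 : Q1 x != Q3 x by rewrite -subr_eq0 e13 oppr_eq0 lt0r_neq0.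
have n23 : Q2 x != Q3 x by rewrite -subr_eq0 e23 oppr_eq0 lt0r_neq0.
rewrite /lagrangian /pairpot (negbTE n12) (negbTE n13) (negbTE n23) -!EFinD lee_fin.
rewrite e12 e13 e23 !normrN !gtr0_norm //.
rewrite /V2 /V3 sqrrN V1sq expr0n /= addr0 invfM PiZ.
have := @ineq _ _ P0 P2 x1.
rewrite /W2 /Gf /KK.
set Z := x `^ (-(2/3)).
set T1 := (aa / 2 * (3 - x `^ (2 / 3)))^-1.
set T2 := (aa / 2 * (x `^ (2 / 3) + 3))^-1.
set c := aa ^+ 2 / 9.
move=> H.
have -> : (c * Z + c * Z) / 2 + aa^-1 * Z + T1 + T2 = (c + aa^-1) * Z + (T1 + T2).
  by field; rewrite lt0r_neq0.
by apply: lerD.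
Qed.

Lemma action_le : (action Q1 Q2 Q3 V1 V2 V3 <= (GF 1 - GF 0)%:E)%E.
Proof.
pose G (t : R) : \bar R := if t == 0 then +oo%E else (Gf t)%:E.
have lag0 t : (0 <= lagrangian Q1 Q2 Q3 V1 V2 V3 t)%E.
  rewrite /lagrangian /pairpot.
  have pp0 (u w : R) : (0 <= (if u == w then +oo else (`|u - w|^-1)%:E))%E.
    by case: ifP => _; rewrite ?leey // lee_fin invr_ge0.
  by rewrite !adde_ge0 // lee_fin divr_ge0 // !addr_ge0 // sqr_ge0.
have G0 t : `[0%R, 1%R] t -> (0 <= G t)%E.
  rewrite /= in_itv /= => /andP[t0 _].
  by rewrite /G; case: ifP => _; rewrite ?leey // lee_fin Gf_ge0.
apply: (@le_trans _ _ (\int[mu]_(x in `[0%R, 1%R]) G x)%E).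
  rewrite /action (ge0_integralE mu (fun t _ => lag0 t)) (ge0_integralE mu G0).
  apply: ereal_sup_le => _ [h hle <-]; exists h => // t.
  apply: le_trans (hle t) _.
  rewrite /patch; case: ifP => // /set_mem /=; rewrite in_itv /= => /andP[t0 t1].
  rewrite /G; case: eqP => [_|tn0]; first exact: leey.
  by apply: lag_le => //; rewrite lt_neqAle t0 andbT eq_sym; apply/eqP.
rewrite -integral_itv_obnd_cbnd; last first.
  have MF : measurable_fun (`]0%R, 1%R] : set R) (EFin \o Gf : R -> \bar R).
    by apply/measurable_EFinP; exact: (measurable_funTS mGf).
  have EQ : {in (`]0%R, 1%R] : set R), EFin \o Gf =1 G}.
    move=> t; rewrite inE /= in_itv /= => /andP[t0 _].
    by rewrite /G gt_eqF.
  exact: (eq_measurable_fun _ EQ MF).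
have -> : (\int[mu]_(x in `]0%R, 1%R]) G x = \int[mu]_(x in `]0%R, 1%R]) (Gf x)%:E)%E.
  apply: eq_integral => t; rewrite inE /= in_itv /= => /andP[t0 _].
  by rewrite /G gt_eqF.
by rewrite (KL Gf GF 1 ltr01 (measurable_funTS mGf)
  (fun t t0 => Gf_ge0 t (ltW t0)) cGf dGF lGF).
Qed.

Lemma adm : admissible Q1 Q2 Q3 V1 V2 V3.
Proof.
have a0 := aa_gt0.
have h0 : (0:R) `^ (2/3) = 0 by rewrite powR0 // n0 // divr_gt0.
have h1 : (1:R) `^ (2/3) = 1 by rewrite powR1.
have iV1 b : 0 < b -> mu.-integrable `[0%R, b] (EFin \o V1).
  by move=> b0; exact: (integ0b V1 Q1 b b0 mV1 V1_ge0 cV1 dQ1 lQ1).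
have iW2 : mu.-integrable `[0%R, 1%R] (EFin \o (fun t => V1 t ^+ 2)).
  have -> : (fun t => V1 t ^+ 2) = W2 by apply/funext => t; exact: V1sq.
  exact: (integ0b W2 SqF 1 ltr01 mW2 W2_ge0 cW2 dSq lSq).
have RV1 t : 0 < t -> \int[mu]_(x in `[0%R, t]) V1 x = Q1 t - Q1 0.
  by move=> t0; exact: (Rint0b V1 Q1 t t0 mV1 (fun x _ => V1_ge0 x) cV1 dQ1 lQ1).
have cases (t : R) : 0 <= t -> t = 0 \/ 0 < t.
  by move=> t0; move: t0; rewrite le_eqVlt => /orP[/eqP <-|]; [left|right].
split.
- split; first exact: iV1 ltr01.
  split; first exact: iW2.
  move=> t; rewrite in_itv /= => /andP[/cases [->|t0] _].
    by rewrite set_itv1 Rintegral_set1 addr0.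
  by rewrite RV1 // addrC subrK.
- split.
    have -> : EFin \o V2 = -%E \o (EFin \o V1) by apply/funext => t; rewrite /= /V2 EFinN.
    exact: integrableN (iV1 1 ltr01).
  split.
    have -> : (fun t => V2 t ^+ 2) = (fun t => V1 t ^+ 2).
      by apply/funext => t; rewrite /V2 sqrrN.
    exact: iW2.
  move=> t; rewrite in_itv /= => /andP[/cases [->|t0] _].
    by rewrite set_itv1 Rintegral_set1 addr0.
  have -> : \int[mu]_(x in `[0%R, t]) V2 x = \int[mu]_(x in `[0%R, t]) (-1 * V1 x).
    by apply: eq_Rintegral => x _; rewrite /V2 mulN1r.
  rewrite RintegralZl //; last exact: iV1.
  by rewrite RV1 // /Q1 /Q2; field.
- split.
    have -> : EFin \o V3 = cst 0%E by apply/funext.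
    exact: integrable0.
  split.
    have -> : EFin \o (fun t => V3 t ^+ 2) = cst 0%E.
      by apply/funext => t; rewrite /= /V3 expr0n.
    exact: integrable0.
  by move=> t _; rewrite /V3 Rintegral_cst // mul0r addr0.
- by move=> t _; rewrite /Q1 /Q2 /Q3; field.
- by exists (aa/2), aa; split; split; rewrite /Q1 /Q2 /Q3 ?h0 ?h1; field.
Qed.

Lemma GF_val : GF 1 - GF 0 = 10159 / 2880.
Proof.
rewrite /GF /KK /aa powR1 powR0 ?n0 ?divr_gt0 //.
by rewrite expr0n expr1n /=; field.
Qed.

End Path.

Theorem corollary3p3 (R : realType) :
  (((4%:R)^-1 : R)%:E * schubart_action R < (35383%:R / 10000%:R : R)%:E)%E.
Proof.
rewrite /schubart_action muleA -EFinM mulVf ?pnatr_eq0 // mul1e.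
apply: (@le_lt_trans _ _ ((@GF R 1 - @GF R 0)%:E)).
  apply: le_trans (@action_le R).
  apply: ereal_inf_lbound.
  by exists Q1, Q2, Q3, V1, V2, V3; split => //; exact: adm.
rewrite lte_fin GF_val.
lra.
Qed.
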